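(* Let $N\ge3$, $z=\lfloor N/2\rfloor$, $n=\lfloor (N+1)/2\rfloor$ (so $N=2n$ or $N=2n-1$), $\nu_1,\dots,\nu_z\in\mathbb C$ and let $\mathcal F=\mathcal F^{\mathcal P}_{(z-1)\prec0}(\nu_1,\dots,\nu_z)$ be the full peripheric chain, with twisted coproduct $\Delta_{\mathcal F}(X)=\mathcal F\Delta(X)\mathcal F^{-1}$. Then the following $2n+z-2$ elements are primitive for $\Delta_{\mathcal F}$ (i.e. $\Delta_{\mathcal F}(Y)=Y\otimes1+1\otimes Y$): (i) $\sigma_{k+1,N-k}(\nu_{k+1})$ for $k=0,\dots,z-1$; (ii) $E_{j,N-j}$ for $j=1,\dots,n-1$; (iii) $H^\perp_i$ for $i=1,\dots,n-1$. Moreover $[H^\perp_i,E_{j,N-j}]=\delta_{ij}E_{j,N-j}$, all $H^\perp_i$ commute, and all elements in (i) and (ii) commute with each other.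
   Context: Work over $\mathbb C$ with $U=U(sl(N))$ with primitive generators. $E_{ij}$ are matrix units of $gl(N)$, $I=\sum_sE_{ss}$. $\xi$ is a formal parameter; all computations are in the $\xi$-adically completed algebras $U[[\xi]]$, $(U\otimes U)[[\xi]]$. $\sigma_{ij}(c):=\ln(1+\xi cE_{ij})$; $H^{\mathcal P}_k:=E_{kk}-\frac1NI$; $H^\perp_i:=\frac{N-2i}{N}I-\sum_{m=i+1}^{N-i}E_{mm}$ (a traceless diagonal matrix). For $0\le k\le\lfloor N/2\rfloor-1$, $\mathcal F^{\mathcal P}_k(\nu):=\big(\prod_{s=k+2}^{N-k-1}\exp(\xi\nu E_{k+1,s}\otimes E_{s,N-k})\big)\exp(H^{\mathcal P}_{k+1}\otimes\sigma_{k+1,N-k}(\nu))$ and $\mathcal F^{\mathcal P}_{p\prec0}(\nu_1,\dots,\nu_{p+1}):=\mathcal F^{\mathcal P}_p(\nu_{p+1})\cdots\mathcal F^{\mathcal P}_0(\nu_1)$. *)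

(* Defs.v *)
(* Power series in the formal parameter xi over an algebra A
   are modelled as coefficient sequences nat -> A (A[[xi]]). *)
From mathcomp Require Import all_boot all_algebra.
From mathcomp Require Import Rstruct.
From mathcomp.real_closed Require Import complex.
Set Implicit Arguments.
Unset Strict Implicit.
Unset Printing Implicit Defensive.
Import GRing.Theory.
Local Open Scope ring_scope.

Definition Cplx : fieldType := Rdefinitions.R[i].

Section PowerSeries.
Variables (C : fieldType) (A : algType C).

Definition ps := nat -> A.

Definition psC (a : A) : ps := fun n => if n is 0%N then a else 0.
Definition psXi (a : A) : ps := fun n => if n == 1%N then a else 0.
Definition psadd (f g : ps) : ps := fun n => f n + g n.
Definition psopp (f : ps) : ps := fun n => - f n.
Definition psmul (f g : ps) : ps :=
  fun n => \sum_(i < n.+1) f i * g (n - i)%N.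
Definition pspow (f : ps) (k : nat) : ps := iter k (psmul f) (psC 1).
Definition psprod (fs : seq ps) : ps := foldr psmul (psC 1) fs.

(* exp f, for f with zero constant term (the sum is then xi-adically finite) *)
Definition psexp (f : ps) : ps :=
  fun n => \sum_(k < n.+1) (k`!%:R^-1 : C) *: pspow f k n.
(* ln (1 + f), for f with zero constant term *)
Definition psln1p (f : ps) : ps :=
  fun n => \sum_(k < n.+1 | (0 < k)%N)
             (((-1) ^+ k.-1 : C) / k%:R) *: pspow f k n.
(* inverse of f, for f with constant term 1: sum_k (1 - f)^k *)
Definition psinv (f : ps) : ps :=
  fun n => \sum_(k < n.+1) pspow (psadd (psC 1) (psopp f)) k n.

End PowerSeries.

Section GlN.
Variables (C : fieldType) (A : algType C) (N : nat).

(* Indices are 1-based. *)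
Definition gl_family (e : nat -> nat -> A) : Prop :=
  forall i j k l, (0 < i <= N)%N -> (0 < j <= N)%N -> (0 < k <= N)%N ->
    (0 < l <= N)%N ->
    e i j * e k l - e k l * e i j =
      (j == k)%:R *: e i l - (l == i)%:R *: e k j.

(* two families whose elements pairwise commute (images of U (x) 1 and 1 (x) U) *)
Definition commuting_families (x y : nat -> nat -> A) : Prop :=
  forall i j k l, x i j * y k l = y k l * x i j.

(* the coproduct Delta on generators: E |-> E (x) 1 + 1 (x) E *)
Definition fam_add (x y : nat -> nat -> A) : nat -> nat -> A :=
  fun i j => x i j + y i j.

Variable e : nat -> nat -> A.

Definition glI : A := \sum_(1 <= s < N.+1) e s s.
Definition sigma (i j : nat) (c : C) : ps A := psln1p (psXi (c *: e i j)).
Definition HP (k : nat) : A := e k k - (N%:R^-1 : C) *: glI.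
Definition Hperp (i : nat) : A :=
  ((N%:R - (2 * i)%:R) / N%:R : C) *: glI - \sum_(i.+1 <= m < (N - i).+1) e m m.

End GlN.

Section Chain.
Variables (C : fieldType) (A : algType C) (N : nat).
Variables (x y : nat -> nat -> A).
(* x = first tensor factor (E (x) 1), y = second tensor factor (1 (x) E) *)

(* F^P_k(nu) = (prod_{s=k+2}^{N-k-1} exp(xi nu E_{k+1,s} (x) E_{s,N-k}))
               * exp(H^P_{k+1} (x) sigma_{k+1,N-k}(nu)) *)
Definition FP (k : nat) (nu : C) : ps A :=
  psmul
    (psprod [seq psexp (psXi (nu *: (x k.+1 s * y s (N - k)%N)))
            | s <- iota k.+2 (N - 2 * k - 2)])
    (psexp (fun n => HP N x k.+1 * sigma y k.+1 (N - k)%N nu n)).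

(* F^P_{p < 0}(nu_1,...,nu_{p+1}) = F^P_p(nu_{p+1}) ... F^P_0(nu_1);
   nu is 1-indexed: nu_j = nu j *)
Definition FPchain (p : nat) (nu : nat -> C) : ps A :=
  psprod [seq FP k (nu k.+1) | k <- rev (iota 0 p.+1)].

(* twisted coproduct Delta_F(X) = F Delta(X) F^{-1}; DX is Delta(X) *)
Definition twist (F DX : ps A) : ps A := psmul (psmul F DX) (psinv F).

End Chain.

(* Main.v *)
Require Import Defs.
From HB Require Import structures.
From mathcomp Require Import all_boot all_algebra.
From mathcomp Require Import boolp zify.
From mathcomp Require Import Rstruct.
From mathcomp.real_closed Require Import complex.
Set Implicit Arguments.
Unset Strict Implicit.
Unset Printing Implicit Defensive.
Import GRing.Theory.
Local Open Scope ring_scope.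

Section PSer.
Variables (C : fieldType) (A : algType C).

Definition pser : Type := nat -> A.
HB.instance Definition _ := Choice.on pser.

Definition pzero : pser := fun _ => 0.
Definition padd (f g : pser) : pser := psadd f g.
Definition popp (f : pser) : pser := psopp f.

Lemma paddA : associative padd.
Proof. by move=> f g h; apply: funext=> n; rewrite /padd /psadd addrA. Qed.
Lemma paddC : commutative padd.
Proof. by move=> f g; apply: funext=> n; rewrite /padd /psadd addrC. Qed.
Lemma padd0 : left_id pzero padd.
Proof. by move=> f; apply: funext=> n; rewrite /padd /psadd add0r. Qed.
Lemma paddN : left_inverse pzero popp padd.
Proof. by move=> f; apply: funext=> n; rewrite /padd /psadd /popp /psopp addNr. Qed.

HB.instance Definition _ := GRing.isZmodule.Build pser paddA paddC padd0 paddN.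

Definition pone : pser := psC 1.
Definition pmul (f g : pser) : pser := psmul f g.

Definition tr (m : nat) (f : pser) : {poly A} := \poly_(i < m) f i.

Lemma pmul_tr f g m n : (n < m)%N -> psmul f g n = (tr m f * tr m g)`_n.
Proof.
move=> nm; rewrite coefM /psmul; apply: eq_bigr => i _.
rewrite !coef_poly; have ii : (i < m)%N by apply: leq_ltn_trans nm; rewrite -ltnS.
rewrite ii; have -> : (n - i < m)%N by apply: leq_ltn_trans (leq_subr _ _) nm.
done.
Qed.

Lemma pmulA : associative pmul.
Proof.
move=> f g h; apply: funext=> n.
have H1 : pmul (pmul f g) h n = ((tr n.+1 f * tr n.+1 g) * tr n.+1 h)`_n.
  have -> : pmul (pmul f g) h n = \sum_(i < n.+1) psmul f g i * h (n - i)%N by [].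
  rewrite coefM; apply: eq_bigr => i _.
  rewrite (pmul_tr _ _ (ltn_ord i)) coef_poly.
  by rewrite (leq_ltn_trans (leq_subr _ _) (ltnSn n)).
have H2 : pmul f (pmul g h) n = (tr n.+1 f * (tr n.+1 g * tr n.+1 h))`_n.
  have -> : pmul f (pmul g h) n = \sum_(i < n.+1) f i * psmul g h (n - i)%N by [].
  rewrite coefM; apply: eq_bigr => i _.
  rewrite (pmul_tr _ _ (leq_ltn_trans (leq_subr _ _) (ltnSn n))).
  by rewrite coef_poly (ltn_ord i).
by rewrite H1 H2 mulrA.
Qed.

Lemma pmul1r : left_id pone pmul.
Proof.
move=> f; apply: funext=> n; rewrite /pmul /psmul big_ord_recl /= subn0 mul1r.
by rewrite big1 ?addr0 // => i _; rewrite /= mul0r.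
Qed.

Lemma pmulr1 : right_id pone pmul.
Proof.
move=> f; apply: funext=> n; rewrite /pmul /psmul big_ord_recr /= subnn mulr1.
rewrite big1 ?add0r // => i _ /=; case E: (n - i)%N => [|k]; last by rewrite mulr0.
by move: (ltn_ord i); rewrite -subn_gt0 E.
Qed.

Lemma pmulDl : left_distributive pmul +%R.
Proof.
move=> f g h; apply: funext=> n; transitivity (psmul f h n + psmul g h n); last by [].
rewrite /psmul -big_split /=.
by apply: eq_bigr => i _; rewrite -mulrDl.
Qed.

Lemma pmulDr : right_distributive pmul +%R.
Proof.
move=> f g h; apply: funext=> n; transitivity (psmul f g n + psmul f h n); last by [].
rewrite /psmul -big_split /=.
by apply: eq_bigr => i _; rewrite -mulrDr.
Qed.

Lemma pone_neq0 : pone != 0.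
Proof.
apply/eqP => /(congr1 (fun f : pser => f 0%N)); rewrite /pone /psC /=.
by move/eqP; rewrite oner_eq0.
Qed.

HB.instance Definition _ := GRing.Zmodule_isNzRing.Build pser
  pmulA pmul1r pmulr1 pmulDl pmulDr pone_neq0.

Definition pscale (c : C) (f : pser) : pser := fun n => c *: f n.
Lemma pscaleA a b v : pscale a (pscale b v) = pscale (a * b) v.
Proof. by apply: funext => n; rewrite /pscale scalerA. Qed.
Lemma pscale1 : left_id 1 pscale.
Proof. by move=> v; apply: funext => n; rewrite /pscale scale1r. Qed.
Lemma pscaleDr : right_distributive pscale +%R.
Proof. by move=> a u v; apply: funext => n; rewrite /pscale /= /padd /psadd scalerDr. Qed.
Lemma pscaleDl v : {morph pscale^~ v: a b / a + b}.
Proof. by move=> a b; apply: funext => n; rewrite /pscale /= /padd /psadd scalerDl. Qed.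
HB.instance Definition _ := GRing.Zmodule_isLmodule.Build C pser
  pscaleA pscale1 pscaleDr pscaleDl.
Lemma pscaleAl (a : C) (u v : pser) : a *: (u * v) = (a *: u) * v.
Proof.
apply: funext => n; transitivity (a *: psmul u v n); first by [].
transitivity (psmul (pscale a u) v n); last by [].
rewrite /psmul scaler_sumr.
by apply: eq_bigr => i _; rewrite scalerAl.
Qed.
HB.instance Definition _ := GRing.Lmodule_isLalgebra.Build C pser pscaleAl.
Lemma pscaleAr (a : C) (u v : pser) : a *: (u * v) = u * (a *: v).
Proof.
apply: funext => n; transitivity (a *: psmul u v n); first by [].
transitivity (psmul u (pscale a v) n); last by [].
rewrite /psmul scaler_sumr.
by apply: eq_bigr => i _; rewrite scalerAr.
Qed.
HB.instance Definition _ := GRing.Lalgebra_isAlgebra.Build C pser pscaleAr.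

Lemma mulE (f g : pser) n : (f * g) n = \sum_(i < n.+1) f i * g (n - i)%N.
Proof. by []. Qed.
Lemma addE (f g : pser) n : (f + g) n = f n + g n. Proof. by []. Qed.
Lemma oppE (f : pser) n : (- f) n = - f n. Proof. by []. Qed.
Lemma subE (f g : pser) n : (f - g) n = f n - g n. Proof. by []. Qed.
Lemma zeroE n : (0 : pser) n = 0. Proof. by []. Qed.
Lemma scaleE c (f : pser) n : (c *: f) n = c *: f n. Proof. by []. Qed.
Lemma oneE n : (1 : pser) n = if n is 0 then 1 else 0. Proof. by []. Qed.
Lemma sumE (I : Type) (r : seq I) (P : pred I) (F : I -> pser) n :
  (\sum_(i <- r | P i) F i) n = \sum_(i <- r | P i) F i n.
Proof.
elim: r => [|a r IH]; first by rewrite !big_nil.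
by rewrite !big_cons; case: (P a); rewrite ?addE IH.
Qed.

Lemma pspowE (f : pser) k : pspow f k = f ^+ k.
Proof. by elim: k => [|k IH] //; rewrite exprS -IH. Qed.
Lemma psprodE (fs : seq pser) : psprod fs = \prod_(f <- fs) f.
Proof. by elim: fs => [|f fs IH]; rewrite ?big_nil ?big_cons //= -IH. Qed.


Implicit Types f g h a b d J P Q W u v : pser.
Definition low k (f : pser) := forall n, (n < k)%N -> f n = 0.
Definition agree m (f g : pser) := forall n, (n < m)%N -> f n = g n.

Lemma low_mul p q f g : low p f -> low q g -> low (p + q) (f * g).
Proof.
move=> lf lg n npq; rewrite mulE big1 // => i _.
case: (ltnP i p) => ip; first by rewrite lf ?mul0r.
rewrite lg ?mulr0 //; move: (ltn_ord i); lia.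
Qed.

Lemma low_exp f k : f 0%N = 0 -> low k (f ^+ k).
Proof.
move=> f0; elim: k => [|k IH]; first by move=> n.
rewrite exprS -add1n; apply: low_mul IH; by case.
Qed.

Lemma agree_mul m f f' g g' : agree m f f' -> agree m g g' -> agree m (f * g) (f' * g').
Proof.
move=> af ag n nm; rewrite !mulE; apply: eq_bigr => i _.
have im : (i < m)%N by apply: leq_ltn_trans nm; rewrite -ltnS.
by rewrite af // ag // (leq_ltn_trans (leq_subr _ _) nm).
Qed.

Lemma agree_refl m f : agree m f f. Proof. by []. Qed.
Lemma agree_sym m f g : agree m f g -> agree m g f.
Proof. by move=> h n nm; rewrite h. Qed.
Lemma agree_trans m f g h : agree m f g -> agree m g h -> agree m f h.
Proof. by move=> h1 h2 n nm; rewrite h1 ?h2. Qed.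
Lemma agree_le m m' f g : (m' <= m)%N -> agree m f g -> agree m' f g.
Proof. by move=> le h n nm; rewrite h // (leq_trans nm le). Qed.
Lemma agree_add m f f' g g' : agree m f f' -> agree m g g' -> agree m (f + g) (f' + g').
Proof. by move=> h1 h2 n nm; rewrite !addE h1 ?h2. Qed.
Lemma agree_low m f g : agree m f g <-> low m (f - g).
Proof.
split=> h n nm; first by rewrite subE h ?subrr.
by apply/eqP; rewrite -subr_eq0; apply/eqP; rewrite -subE h.
Qed.

Lemma sum_trunc (F : nat -> A) n m : (n < m)%N -> (forall k, (n < k)%N -> F k = 0) ->
  \sum_(k < m) F k = \sum_(k < n.+1) F k.
Proof.
move=> nm F0; rewrite [RHS](big_ord_widen m F nm) [RHS]big_mkcond /=; apply: eq_bigr => i _.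
by case: ifP => // /negbT; rewrite -leqNgt => /F0 ->.
Qed.


Definition Pexp f : pser := psexp f.
Definition Pln f : pser := psln1p f.
Definition Pinv f : pser := psinv f.
Definition Pxi (t : A) : pser := psXi t.
Definition Pc (t : A) : pser := psC t.

Definition expT m (f : pser) : pser := \sum_(k < m) (k`!%:R^-1 : C) *: f ^+ k.
Definition lnT m (f : pser) : pser :=
  \sum_(k < m | (0 < k)%N) (((-1) ^+ k.-1 : C) / k%:R) *: f ^+ k.
Definition invT m (f : pser) : pser := \sum_(k < m) (1 - f) ^+ k.

Lemma psexp_T f m : f 0%N = 0 -> agree m (Pexp f) (expT m f).
Proof.
move=> f0 n nm; rewrite /expT sumE (sum_trunc (F := fun k => ((k`!%:R^-1 : C) *: f ^+ k) n) nm) /Pexp /psexp.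
  by apply: eq_bigr => k _; rewrite pspowE.
by move=> k nk; rewrite scaleE (low_exp f0) // scaler0.
Qed.

Lemma psln1p_T f m : f 0%N = 0 -> agree m (Pln f) (lnT m f).
Proof.
move=> f0 n nm; rewrite /lnT sumE.
rewrite (big_mkcond (fun k : 'I_m => (0 < k)%N))
  (sum_trunc (F := fun k => if (0 < k)%N then ((((-1) ^+ k.-1 : C) / k%:R) *: f ^+ k) n else 0) nm); last first.
  by move=> k nk; case: ifP => // _; rewrite scaleE (low_exp f0) // scaler0.
rewrite /Pln /psln1p big_mkcond; apply: eq_bigr => k _; rewrite pspowE.
by case: ifP.
Qed.

Lemma psinv_T f m : f 0%N = 1 -> agree m (Pinv f) (invT m f).
Proof.
move=> f0 n nm; rewrite /invT sumE (sum_trunc (F := fun k => ((1 - f) ^+ k) n) nm) /Pinv /psinv.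
  by apply: eq_bigr => k _; rewrite pspowE.
by move=> k nk; rewrite (low_exp _) // subE f0 oneE subrr.
Qed.

Lemma agree_all f g : (forall m, agree m f g) -> f = g.
Proof. by move=> h; apply: funext => n; apply: (h n.+1). Qed.

Lemma psinvK f : f 0%N = 1 -> f * Pinv f = 1 /\ Pinv f * f = 1.
Proof.
move=> f0; set u := 1 - f.
have u0 : u 0%N = 0 by rewrite /u subE f0 oneE subrr.
have ef : f = 1 - u by rewrite /u opprB addrC subrK.
have key m : invT m f * f = 1 - u ^+ m /\ f * invT m f = 1 - u ^+ m.
  have cm : GRing.comm u (invT m f).
    by apply: commr_sum => k _; apply: commrX.
  have h := subrX1 u m; rewrite mulrBl mul1r in h.
  have -> : invT m f * f = invT m f * (1 - u) by rewrite -ef.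
  have -> : f * invT m f = (1 - u) * invT m f by rewrite -ef.
  rewrite mulrBr mulrBl mulr1 mul1r -cm.
  by rewrite -[1 - u ^+ m]opprB h opprB.
have ag m : agree m (1 - u ^+ m) 1.
  by move=> n nm; rewrite subE (low_exp u0) // subr0.
split; apply: agree_all => m n nm.
  rewrite (agree_mul (@agree_refl m f) (psinv_T (m:=m) f0) nm).
  by rewrite (key m).2 ag.
rewrite (agree_mul (psinv_T (m:=m) f0) (@agree_refl m f) nm).
by rewrite (key m).1 ag.
Qed.



Lemma mul0E f g : (f * g) 0%N = f 0%N * g 0%N.
Proof. by rewrite mulE big_ord1 subn0. Qed.

Lemma Pexp0 f : Pexp f 0%N = 1.
Proof.
by rewrite /Pexp /psexp /= big_ord1 /= invr1 scale1r.
Qed.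

Lemma Pln0 f : Pln f 0%N = 0.
Proof. by rewrite /Pln /psln1p /= big1 // =>  -[[|k]]. Qed.

Lemma Pxi0 t : Pxi t 0%N = 0. Proof. by []. Qed.

Lemma comm_expT P f m : P * f = f * P -> P * expT m f = expT m f * P.
Proof.
move=> h; rewrite /expT mulr_sumr mulr_suml; apply: eq_bigr => k _.
by rewrite -scalerAr -scalerAl (commrX k h).
Qed.

Lemma comm_lnT P f m : P * f = f * P -> P * lnT m f = lnT m f * P.
Proof.
move=> h; rewrite /lnT mulr_sumr mulr_suml; apply: eq_bigr => k _.
by rewrite -scalerAr -scalerAl (commrX k h).
Qed.

Lemma exp_comm P f : f 0%N = 0 -> P * f = f * P -> P * Pexp f = Pexp f * P.
Proof.
move=> f0 h; apply: agree_all => m n nm.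
rewrite (agree_mul (@agree_refl m P) (psexp_T (m:=m) f0) nm).
by rewrite (agree_mul (psexp_T (m:=m) f0) (@agree_refl m P) nm) comm_expT.
Qed.

Lemma ln_comm P f : f 0%N = 0 -> P * f = f * P -> P * Pln f = Pln f * P.
Proof.
move=> f0 h; apply: agree_all => m n nm.
rewrite (agree_mul (@agree_refl m P) (psln1p_T (m:=m) f0) nm).
by rewrite (agree_mul (psln1p_T (m:=m) f0) (@agree_refl m P) nm) comm_lnT.
Qed.

Lemma exp_intw a (a' : pser) b : a 0%N = 0 -> a' 0%N = 0 -> a * b = b * a' ->
  Pexp a * b = b * Pexp a'.
Proof.
move=> a0 a'0 h.
have hp k : a ^+ k * b = b * a' ^+ k.
  elim: k => [|k IH]; first by rewrite !expr0 mul1r mulr1.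
  by rewrite !exprS -mulrA IH mulrA h mulrA.
apply: agree_all => m n nm.
rewrite (agree_mul (psexp_T (m:=m) a0) (@agree_refl m b) nm).
rewrite (agree_mul (@agree_refl m b) (psexp_T (m:=m) a'0) nm).
congr (_ n); rewrite /expT mulr_sumr mulr_suml; apply: eq_bigr => k _.
by rewrite -scalerAr -scalerAl hp.
Qed.

Lemma expT_mul_intw J (Ji : pser) f m : J * Ji = 1 -> Ji * J = 1 -> (J * f * Ji) ^+ m = J * f ^+ m * Ji.
Proof.
move=> h0 h; elim: m => [|m IH]; first by rewrite !expr0 mulr1 h0.
by rewrite !exprS IH -!mulrA (mulrA Ji) h mul1r !mulrA.
Qed.

Lemma ln_conj J (Ji : pser) g : J * Ji = 1 -> Ji * J = 1 -> g 0%N = 0 ->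
  Pln (J * g * Ji) = J * Pln g * Ji.
Proof.
move=> h1 h2 g0.
have g'0 : (J * g * Ji) 0%N = 0 by rewrite !mul0E g0 mulr0 mul0r.
apply: agree_all => m n nm.
rewrite (psln1p_T (m:=m) g'0 nm).
rewrite (agree_mul (agree_mul (@agree_refl m J) (psln1p_T (m:=m) g0)) (@agree_refl m Ji) nm).
congr (_ n); rewrite /lnT mulr_sumr mulr_suml; apply: eq_bigr => k _.
by rewrite -scalerAr -scalerAl expT_mul_intw.
Qed.


Hypothesis charC : forall k, (k.+1%:R : C) != 0.

Lemma fact_nz k : (k`!%:R : C) != 0.
Proof.
elim: k => [|k IH]; first by rewrite oner_eq0.
by rewrite factS natrM mulf_neq0.
Qed.

Lemma coef_factS k : ((k.+1)`!%:R^-1 : C) * k.+1%:R = k`!%:R^-1.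
Proof.
by rewrite factS natrM invfM mulrAC mulVf ?mul1r.
Qed.

Lemma scale_inj k (w : A) : (k.+1%:R : C) *: w = 0 -> w = 0.
Proof.
move=> h; have := congr1 (fun v : A => (k.+1%:R : C)^-1 *: v) h.
by rewrite scalerA mulVf // scale1r scaler0.
Qed.

Definition pD f : pser := fun n => (n%:R : C) *: f n.

Lemma pD0E f : pD f 0%N = 0. Proof. by rewrite /pD scale0r. Qed.
Lemma pDD f g : pD (f + g) = pD f + pD g.
Proof. by apply: funext => n; rewrite /pD addE scalerDr. Qed.
Lemma pDN f : pD (- f) = - pD f.
Proof. by apply: funext => n; rewrite /pD !oppE scalerN. Qed.
Lemma pDB f g : pD (f - g) = pD f - pD g.
Proof. by rewrite pDD pDN. Qed.
Lemma pDZ c f : pD (c *: f) = c *: pD f.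
Proof. by apply: funext => n; rewrite /pD !scaleE !scalerA mulrC. Qed.
Lemma pD1 : pD 1 = 0.
Proof. by apply: funext => -[|n]; rewrite /pD oneE ?scale0r ?scaler0. Qed.
Lemma pD_sum (I : Type) (r : seq I) (P : pred I) (F : I -> pser) :
  pD (\sum_(i <- r | P i) F i) = \sum_(i <- r | P i) pD (F i).
Proof.
elim: r => [|i r IH]; first by rewrite !big_nil; apply: funext => n; rewrite /pD zeroE scaler0.
by rewrite !big_cons; case: (P i); rewrite ?pDD IH.
Qed.

Lemma pDM f g : pD (f * g) = pD f * g + f * pD g.
Proof.
apply: funext => n; rewrite addE /pD !mulE scaler_sumr -big_split /=.
apply: eq_bigr => i _; rewrite -scalerAl -scalerAr -scalerDl -natrD.
by rewrite subnKC // -ltnS.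
Qed.

Lemma pDX f k : f * pD f = pD f * f -> pD (f ^+ k.+1) = k.+1%:R *: (pD f * f ^+ k).
Proof.
move=> h; elim: k => [|k IH]; first by rewrite expr1 expr0 mulr1 scale1r.
rewrite exprS pDM IH -scalerAr mulrA h -mulrA -exprS.
by rewrite -[k.+2]add1n natrD scalerDl scale1r.
Qed.

Lemma agree_pD m f g : agree m f g -> agree m (pD f) (pD g).
Proof. by move=> h n nm; rewrite /pD h. Qed.

Lemma pD_expT f m : f * pD f = pD f * f -> pD (expT m.+1 f) = pD f * expT m f.
Proof.
move=> h; rewrite /expT big_ord_recl pDD pD_sum pDZ expr0 pD1 scaler0 add0r.
rewrite mulr_sumr; apply: eq_bigr => k _; rewrite pDZ /= pDX // scalerA.
by rewrite coef_factS -scalerAr.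
Qed.

Lemma pD_exp f : f 0%N = 0 -> f * pD f = pD f * f -> pD (Pexp f) = pD f * Pexp f.
Proof.
move=> f0 h; apply: agree_all => m n nm.
have e1 := agree_pD (psexp_T (m:=m.+1) f0) (ltnW nm).
rewrite e1 pD_expT //.
by rewrite (agree_mul (@agree_refl m (pD f)) (agree_sym (psexp_T (m:=m) f0)) nm).
Qed.

Lemma ode0 W Q : W 0%N = 0 -> Q 0%N = 0 -> pD W = Q * W -> W = 0.
Proof.
move=> W0 Q0 h.
suff H n : forall k, (k <= n)%N -> W k = 0 by apply: funext => k; apply: (H k).
elim: n => [|n IH] k; first by rewrite leqn0 => /eqP ->.
rewrite leq_eqVlt => /orP[/eqP -> | ]; last by apply: IH.
have := congr1 (fun f => f n.+1) h; rewrite /pD mulE big_ord_recl Q0 mul0r add0r.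
rewrite big1 => [/scale_inj //|i _]; rewrite IH ?mulr0 //=.
by rewrite subSS leq_subr.
Qed.

Definition cc f g := forall i j, f i * g j = g j * f i.

Lemma cc_comm f g : cc f g -> f * g = g * f.
Proof.
move=> h; apply: funext => n; rewrite !mulE.
rewrite [RHS](reindex_inj rev_ord_inj) /=; apply: eq_bigr => i _.
by rewrite h subSS subKn // -ltnS.
Qed.

Lemma cc_sym f g : cc f g -> cc g f.
Proof. by move=> h i j; rewrite h. Qed.
Lemma cc_addl f g h : cc f h -> cc g h -> cc (f + g) h.
Proof. by move=> h1 h2 i j; rewrite addE mulrDl mulrDr h1 h2. Qed.
Lemma cc_oppl f h : cc f h -> cc (- f) h.
Proof. by move=> h1 i j; rewrite oppE mulNr mulrN h1. Qed.
Lemma cc_scalel c f h : cc f h -> cc (c *: f) h.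
Proof. by move=> h1 i j; rewrite scaleE -scalerAl -scalerAr h1. Qed.
Lemma cc_0l h : cc 0 h.
Proof. by move=> i j; rewrite zeroE mul0r mulr0. Qed.
Lemma cc_1l h : cc 1 h.
Proof. by move=> [|i] j; rewrite oneE ?mul1r ?mulr1 ?mul0r ?mulr0. Qed.
Lemma cc_mull f g h : cc f h -> cc g h -> cc (f * g) h.
Proof.
move=> h1 h2 i j; rewrite mulE mulr_suml mulr_sumr; apply: eq_bigr => k _.
by rewrite -mulrA h2 !mulrA h1.
Qed.
Lemma cc_expl f h k : cc f h -> cc (f ^+ k) h.
Proof.
move=> h1; elim: k => [|k IH]; first exact: cc_1l.
by rewrite exprS; apply: cc_mull.
Qed.
Lemma cc_suml (I : Type) (r : seq I) (P : pred I) (F : I -> pser) h :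
  (forall i, P i -> cc (F i) h) -> cc (\sum_(i <- r | P i) F i) h.
Proof.
move=> H; elim: r => [|i r IH]; first by rewrite big_nil; apply: cc_0l.
by rewrite big_cons; case: ifP => Pi //; apply: cc_addl => //; apply: H.
Qed.
Lemma cc_pDl f h : cc f h -> cc (pD f) h.
Proof. by move=> h1 i j; rewrite /pD -scalerAl -scalerAr h1. Qed.
Lemma cc_agree f h (T : nat -> pser) : (forall m, agree m f (T m)) ->
  (forall m, cc (T m) h) -> cc f h.
Proof. by move=> ag ct i j; rewrite (ag i.+1 i) // ct. Qed.
Lemma cc_expl' f h : f 0%N = 0 -> cc f h -> cc (Pexp f) h.
Proof.
move=> f0 h1; apply: (cc_agree (fun m => psexp_T (m:=m) f0)) => m.
apply: cc_suml => k _; apply: cc_scalel; exact: cc_expl.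
Qed.
Lemma cc_lnl f h : f 0%N = 0 -> cc f h -> cc (Pln f) h.
Proof.
move=> f0 h1; apply: (cc_agree (fun m => psln1p_T (m:=m) f0)) => m.
apply: cc_suml => k _; apply: cc_scalel; exact: cc_expl.
Qed.


Lemma cc_symr f g : cc f g -> cc g f. Proof. exact: cc_sym. Qed.
Lemma cc_addr f g h : cc h f -> cc h g -> cc h (f + g).
Proof. by move=> h1 h2; apply: cc_sym; apply: cc_addl; apply: cc_sym. Qed.
Lemma cc_mulr f g h : cc h f -> cc h g -> cc h (f * g).
Proof. by move=> h1 h2; apply: cc_sym; apply: cc_mull; apply: cc_sym. Qed.
Lemma cc_1r h : cc h 1. Proof. by apply: cc_sym; apply: cc_1l. Qed.
Lemma cc_pDr f h : cc h f -> cc h (pD f).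
Proof. by move=> h1; apply: cc_sym; apply: cc_pDl; apply: cc_sym. Qed.
Lemma cc_lnr f h : f 0%N = 0 -> cc h f -> cc h (Pln f).
Proof. by move=> f0 h1; apply: cc_sym; apply: cc_lnl => //; apply: cc_sym. Qed.
Lemma cc_expr f h : f 0%N = 0 -> cc h f -> cc h (Pexp f).
Proof. by move=> f0 h1; apply: cc_sym; apply: cc_expl' => //; apply: cc_sym. Qed.

Lemma expT_K2 a b q m : a * b = b * a + q -> q * a = a * q ->
  expT m.+1 a * b = b * expT m.+1 a + q * expT m a.
Proof.
move=> h hq.
have hp k : a ^+ k.+1 * b = b * a ^+ k.+1 + k.+1%:R *: (q * a ^+ k).
  elim: k => [|k IH]; first by rewrite expr1 expr0 mulr1 scale1r.
  rewrite exprS -mulrA IH mulrDr mulrA h mulrDl -mulrA -exprS -scalerAr [a * (q * _)]mulrA -hq.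
  rewrite -mulrA -exprS -addrA; congr (_ + _).
  by rewrite -[k.+2]add1n natrD scalerDl scale1r.
rewrite /expT mulr_suml !mulr_sumr big_ord_recl [X in _ = X + _]big_ord_recl -addrA.
congr (_ + _); first by rewrite -scalerAl -scalerAr !expr0 mul1r mulr1.
rewrite -big_split; apply: eq_bigr => i _ /=.
rewrite -scalerAl -scalerAr hp scalerDr scalerA coef_factS -scalerAr.
done.
Qed.

Lemma exp_K2 a b q : a 0%N = 0 -> a * b = b * a + q -> q * a = a * q ->
  Pexp a * b = (b + q) * Pexp a.
Proof.
move=> a0 h hq; apply: agree_all => m n nm.
have e1 := agree_mul (psexp_T (m:=m.+1) a0) (@agree_refl m.+1 b) (ltnW nm).
rewrite e1 (expT_K2 _ h hq) mulrDl !addE.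
rewrite (agree_mul (@agree_refl m.+1 b) (agree_sym (psexp_T (m:=m.+1) a0)) (ltnW nm)).
by rewrite (agree_mul (@agree_refl m q) (agree_sym (psexp_T (m:=m) a0)) nm).
Qed.

Lemma exp_add a d : a 0%N = 0 -> d 0%N = 0 -> cc a a -> cc d d -> cc a d ->
  Pexp (a + d) = Pexp a * Pexp d.
Proof.
move=> a0 d0 caa cdd cad.
set s := a + d.
have s0 : s 0%N = 0 by rewrite /s addE a0 d0 addr0.
have css : cc s s by apply: cc_addl; apply: cc_addr => //; apply: cc_sym.
have hG : pD (Pexp s) = pD s * Pexp s.
  by apply: pD_exp => //; apply: cc_comm; apply: cc_pDr.
have hc : Pexp a * pD d = pD d * Pexp a.
  by apply: cc_comm; apply: cc_expl' => //; apply: cc_pDr.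
have hH : pD (Pexp a * Pexp d) = pD s * (Pexp a * Pexp d).
  rewrite pDM (pD_exp a0) ?(pD_exp d0); try by apply: cc_comm; apply: cc_pDr.
  by rewrite [Pexp a * (_ * _)]mulrA hc -[pD d * _ * _]mulrA -[pD a * _ * _]mulrA -mulrDl /s pDD.
apply/eqP; rewrite -subr_eq0; apply/eqP.
apply: (ode0 (Q := pD s)).
- by rewrite subE mul0E !Pexp0 mulr1 subrr.
- exact: pD0E.
by rewrite pDB hG hH mulrBr.
Qed.

Lemma sgn_scale (g : pser) i : ((-1) ^+ i : C) *: g ^+ i = (- g) ^+ i.
Proof.
elim: i => [|i IH]; first by rewrite !expr0 scale1r.
by rewrite !exprS -scalerA -IH scalerAr scaleN1r mulNr -scalerAr.
Qed.

Lemma pD_lnT g m : cc g g -> pD (lnT m.+1 g) = pD g * \sum_(j < m) (- g) ^+ j.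
Proof.
move=> cgg; have hc : g * pD g = pD g * g by apply: cc_comm; apply: cc_pDr.
rewrite /lnT big_mkcond big_ord_recl /= add0r pD_sum mulr_sumr.
apply: eq_bigr => i _ /=; rewrite pDZ pDX // scalerA divfK // -sgn_scale.
by rewrite scalerAr.
Qed.

Lemma pD_ln g : g 0%N = 0 -> cc g g -> pD (Pln g) * (1 + g) = pD g.
Proof.
move=> g0 cgg; apply: agree_all => m n nm.
have e1 := agree_mul (agree_pD (psln1p_T (m:=m.+1) g0)) (@agree_refl m.+1 (1 + g)) (ltnW nm).
rewrite e1 pD_lnT //.
set v := - g.
have v0 : v 0%N = 0 by rewrite /v oppE g0 oppr0.
have cm : GRing.comm v (\sum_(j < m) v ^+ j).
  by apply: commr_sum => k _; apply: commrX.
have h := subrX1 v m; rewrite mulrBl mul1r in h.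
have -> : 1 + g = 1 - v by rewrite /v opprK.
rewrite -mulrA mulrBr mulr1 -cm.
have -> : \sum_(j < m) v ^+ j - v * \sum_(j < m) v ^+ j = 1 - v ^+ m.
  by rewrite -[1 - v ^+ m]opprB h opprB.
rewrite mulrBr mulr1 subE.
rewrite (low_mul (p := 0) (q := m) (f := pD g)) ?subr0 //.
exact: low_exp.
Qed.

Lemma exp_ln g : g 0%N = 0 -> cc g g -> Pexp (Pln g) = 1 + g.
Proof.
move=> g0 cgg; set L := Pln g.
have L0 : L 0%N = 0 by apply: Pln0.
have cLL : cc L L by apply: cc_lnl => //; apply: cc_lnr.
have hE : pD (Pexp L) = pD L * Pexp L.
  by apply: pD_exp => //; apply: cc_comm; apply: cc_pDr.
apply/eqP; rewrite -subr_eq0; apply/eqP.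
apply: (ode0 (Q := pD L)).
- by rewrite subE Pexp0 addE g0 oneE addr0 subrr.
- exact: pD0E.
by rewrite pDB hE pDD pD1 add0r mulrBr (pD_ln g0 cgg).
Qed.

Lemma ln_prod u v : u 0%N = 0 -> v 0%N = 0 -> cc u u -> cc v v -> cc u v ->
  Pln (u + v + u * v) = Pln u + Pln v.
Proof.
move=> u0 v0 cuu cvv cuv.
have cvu := cc_sym cuv.
set g := u + v + u * v.
have g0 : g 0%N = 0 by rewrite /g !addE mul0E u0 v0 mulr0 !addr0.
have cug : cc u g by rewrite /g; do 2?apply: cc_addr => //; apply: cc_mulr.
have cvg : cc v g by rewrite /g; do 2?apply: cc_addr => //; apply: cc_mulr.
have cgg : cc g g by rewrite {1}/g; do 2?apply: cc_addl => //; apply: cc_mull.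
have e1 : 1 + g = (1 + u) * (1 + v).
  by rewrite /g mulrDl !mulrDr !mul1r mulr1 -!addrA (addrCA v).
have h1 := pD_ln g0 cgg.
have hu := pD_ln u0 cuu.
have hv := pD_ln v0 cvv.
have c1 : (1 + u) * (1 + v) = (1 + v) * (1 + u).
  by apply: cc_comm; apply: cc_addl; [apply: cc_1l|]; apply: cc_addr => //; apply: cc_1r.
have c2 : u * pD v = pD v * u by apply: cc_comm; apply: cc_pDr.
have h2 : pD (Pln u + Pln v) * (1 + g) = pD g.
  rewrite pDD mulrDl e1 mulrA hu c1 mulrA hv /g !pDD pDM.
  by rewrite !mulrDr !mulr1 c2; rewrite -!addrA; congr (_ + _); rewrite addrC -!addrA; congr (_ + _); rewrite addrC.
have h3 : pD (Pln g - (Pln u + Pln v)) = 0.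
  have g10 : (1 + g) 0%N = 1 by rewrite addE g0 oneE addr0.
  have [i1 _] := psinvK g10.
  have := congr1 (fun w => w * Pinv (1 + g)) (etrans h1 (esym h2)).
  by rewrite /= -!mulrA i1 !mulr1 pDB => ->; rewrite subrr.
apply/eqP; rewrite -subr_eq0; apply/eqP.
apply: (ode0 (Q := 0)).
- by rewrite subE addE !Pln0 addr0 subrr.
- by [].
by rewrite h3 mul0r.
Qed.

End PSer.


Section Elem.
Variables (C : fieldType) (A : algType C) (N : nat).

Definition inr i := (0 < i <= N)%N.

Lemma sum_delta (r : seq nat) p (F : nat -> A) : uniq r ->
  \sum_(m <- r) ((m == p)%:R : C) *: F m = ((p \in r)%:R : C) *: F p.
Proof.
move=> ur; case: (boolP (p \in r)) => pr.
  rewrite (bigD1_seq p) //= eqxx scale1r big1 ?addr0 // => m /negbTE ->.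
  by rewrite scale0r.
rewrite scale0r big1_seq // => m /andP[_ mr].
have /negbTE -> : m != p by apply: contraNneq pr => <-.
by rewrite scale0r.
Qed.

Variable e : nat -> nat -> A.
Hypothesis he : gl_family N e.

Lemma gl_br i j k l : inr i -> inr j -> inr k -> inr l ->
  e i j * e k l = e k l * e i j + (((j == k)%:R : C) *: e i l - ((l == i)%:R : C) *: e k j).
Proof. by move=> *; rewrite -he // addrC subrK. Qed.

Lemma glc i j k l : inr i -> inr j -> inr k -> inr l -> j != k -> l != i ->
  e i j * e k l = e k l * e i j.
Proof.
by move=> ri rj rk rl /negbTE jk /negbTE li; rewrite gl_br // jk li !scale0r subrr addr0.
Qed.

Lemma dsum_br (r : seq nat) p q : uniq r -> (forall m, m \in r -> inr m) -> inr p -> inr q ->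
  (\sum_(m <- r) e m m) * e p q =
  e p q * (\sum_(m <- r) e m m) + (((p \in r)%:R - (q \in r)%:R : C) *: e p q).
Proof.
move=> ur rr rp rq; rewrite mulr_suml mulr_sumr.
rewrite (eq_big_seq (fun m => e p q * e m m +
   ((((m == p)%:R : C) *: e p q) - ((m == q)%:R : C) *: e p q))); last first.
  move=> m mr; rewrite gl_br ?(rr m mr) //; congr (_ + (_ - _)).
    by case: eqP => [->|]; rewrite ?scale0r ?scale1r.
  by rewrite eq_sym; case: eqP => [->|]; rewrite ?scale0r ?scale1r.
rewrite big_split /= sumrB !sum_delta //.
by rewrite scalerBl.
Qed.

Lemma glI_br p q : inr p -> inr q -> glI N e * e p q = e p q * glI N e.
Proof.
move=> rp rq.
have mp : p \in index_iota 1 N.+1 by rewrite mem_index_iota ltnS.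
have mq : q \in index_iota 1 N.+1 by rewrite mem_index_iota ltnS.
rewrite /glI dsum_br //.
- by rewrite mp mq subrr scale0r addr0.
- exact: iota_uniq.
by move=> m; rewrite mem_index_iota ltnS.
Qed.

Lemma HP_br a p q : inr a -> inr p -> inr q ->
  HP N e a * e p q = e p q * HP N e a + (((a == p)%:R - (q == a)%:R : C) *: e p q).
Proof.
move=> ra rp rq; rewrite /HP mulrBl mulrBr -scalerAl glI_br // scalerAr.
rewrite gl_br // scalerBl addrAC; congr (_ + _).
congr (_ - _); first by case: eqP => [->|]; rewrite ?scale0r ?scale1r.
by case: eqP => [->|]; rewrite ?scale0r ?scale1r.
Qed.


Definition Sp i := index_iota i.+1 (N - i)%N.+1.

Lemma Sp_inr i m : m \in Sp i -> inr m.
Proof. rewrite /Sp mem_index_iota /inr; lia. Qed.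

Lemma Hperp_br i p q : inr p -> inr q ->
  Hperp N e i * e p q = e p q * Hperp N e i -
     (((p \in Sp i)%:R - (q \in Sp i)%:R : C) *: e p q).
Proof.
move=> rp rq; rewrite /Hperp mulrBl mulrBr -scalerAl glI_br // scalerAr.
rewrite (dsum_br (r := Sp i)) //; last by move=> m /Sp_inr.
  by rewrite opprD addrA.
exact: iota_uniq.
Qed.

Definition diagc (u : A) := forall m, inr m -> u * e m m = e m m * u.

Lemma diagc_dsum (r : seq nat) u : (forall m, m \in r -> inr m) -> diagc u ->
  u * (\sum_(m <- r) e m m) = (\sum_(m <- r) e m m) * u.
Proof.
move=> rr du; rewrite mulr_sumr mulr_suml; apply: eq_big_seq => m mr.
by rewrite du // rr.
Qed.

Lemma diagc_glI u : diagc u -> u * glI N e = glI N e * u.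
Proof. by move=> du; apply: diagc_dsum => // m; rewrite mem_index_iota ltnS. Qed.

Lemma diagc_HP u a : inr a -> diagc u -> u * HP N e a = HP N e a * u.
Proof.
move=> ra du; rewrite /HP [u * _]mulrBr [_ * u]mulrBl du // -scalerAr -scalerAl diagc_glI //.
Qed.

Lemma diagc_Hperp u i : diagc u -> u * Hperp N e i = Hperp N e i * u.
Proof.
move=> du; rewrite /Hperp [u * _]mulrBr [_ * u]mulrBl -scalerAr -scalerAl diagc_glI //.
by rewrite diagc_dsum // => m /Sp_inr.
Qed.

Lemma diagc_Hperp_self i : diagc (Hperp N e i).
Proof. by move=> m rm; rewrite Hperp_br // subrr scale0r subr0. Qed.

Lemma diagc_HP_self a : inr a -> diagc (HP N e a).
Proof.
move=> ra m rm; rewrite HP_br // eq_sym subrr scale0r addr0 //.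
Qed.

End Elem.

Section Two.
Variables (C : fieldType) (A : algType C) (N : nat) (x y : nat -> nat -> A).
Hypotheses (hx : gl_family N x) (hy : gl_family N y) (hxy : commuting_families x y).

Definition Rk k := iota k.+2 (N - 2 * k - 2)%N.
Definition Tsum k := \sum_(s <- Rk k) x k.+1 s * y s (N - k)%N.

Lemma mem_Rk k s : (2 * k.+1 <= N)%N -> (s \in Rk k) = (k.+1 < s < N - k)%N.
Proof. move=> hk; rewrite /Rk mem_iota; apply/idP/idP; lia. Qed.

Lemma Rk_inr k s : (2 * k.+1 <= N)%N -> s \in Rk k -> inr N s.
Proof. by move=> hk; rewrite mem_Rk // /inr; lia. Qed.

Lemma T_x k s p q : (2 * k.+1 <= N)%N -> s \in Rk k -> inr N p -> inr N q ->
  q != k.+1 -> (N - k)%N != p ->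
  x k.+1 s * y s (N - k)%N * x p q = x p q * (x k.+1 s * y s (N - k)%N) +
    ((s == p)%:R : C) *: (x k.+1 q * y p (N - k)%N).
Proof.
move=> hk sR rp rq qa cp.
have rs := Rk_inr hk sR; move: (sR); rewrite mem_Rk // => hs.
have ra : inr N k.+1 by rewrite /inr; lia.
have rc : inr N (N - k)%N by rewrite /inr; lia.
rewrite -mulrA -hxy mulrA (gl_br hx) // (negbTE qa) scale0r subr0 mulrDl mulrA.
congr (_ + _); case: eqP => [->|]; by rewrite ?scale0r ?mul0r ?scale1r ?mul1r // -scalerAl.
Qed.

Lemma T_y k s p q : (2 * k.+1 <= N)%N -> s \in Rk k -> inr N p -> inr N q ->
  q != k.+1 -> (N - k)%N != p ->
  x k.+1 s * y s (N - k)%N * y p q = y p q * (x k.+1 s * y s (N - k)%N) -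
    ((s == q)%:R : C) *: (x k.+1 q * y p (N - k)%N).
Proof.
move=> hk sR rp rq qa cp.
have rs := Rk_inr hk sR; move: (sR); rewrite mem_Rk // => hs.
have ra : inr N k.+1 by rewrite /inr; lia.
have rc : inr N (N - k)%N by rewrite /inr; lia.
rewrite -mulrA (gl_br hy) // (negbTE cp) scale0r sub0r mulrDr mulrA hxy -mulrA.
congr (_ + _); rewrite mulrN -scalerAr eq_sym; case: eqP => [->|] //.
by rewrite !scale0r oppr0.
Qed.

Lemma TS_x k p q : (2 * k.+1 <= N)%N -> inr N p -> inr N q -> q != k.+1 -> (N - k)%N != p ->
  Tsum k * x p q = x p q * Tsum k + ((p \in Rk k)%:R : C) *: (x k.+1 q * y p (N - k)%N).
Proof.
move=> hk rp rq qa cp; rewrite /Tsum mulr_suml mulr_sumr.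
rewrite (eq_big_seq (fun s => x p q * (x k.+1 s * y s (N - k)%N) +
    ((s == p)%:R : C) *: (x k.+1 q * y p (N - k)%N))); last first.
  by move=> s sR; rewrite T_x.
by rewrite big_split /= (@sum_delta _ _ (Rk k) _ (fun _ => x k.+1 q * y p (N - k)%N)) // iota_uniq.
Qed.

Lemma TS_y k p q : (2 * k.+1 <= N)%N -> inr N p -> inr N q -> q != k.+1 -> (N - k)%N != p ->
  Tsum k * y p q = y p q * Tsum k - ((q \in Rk k)%:R : C) *: (x k.+1 q * y p (N - k)%N).
Proof.
move=> hk rp rq qa cp; rewrite /Tsum mulr_suml mulr_sumr.
rewrite (eq_big_seq (fun s => y p q * (x k.+1 s * y s (N - k)%N) -
    ((s == q)%:R : C) *: (x k.+1 q * y p (N - k)%N))); last first.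
  by move=> s sR; rewrite T_y.
by rewrite big_split /= sumrN (@sum_delta _ _ (Rk k) _ (fun _ => x k.+1 q * y p (N - k)%N)) // iota_uniq.
Qed.

End Two.


Section Glue.
Variables (C : fieldType) (A : algType C).
Hypothesis charC : forall k, (k.+1%:R : C) != 0.
Implicit Types (f g h b : pser A) (u v w : A).

Lemma Pc_mulE u f n : (Pc u * f) n = u * f n.
Proof.
rewrite mulE big_ord_recl /= subn0 big1 ?addr0 // => i _.
by rewrite /Pc /psC /= mul0r.
Qed.

Lemma mul_PcE f u n : (f * Pc u) n = f n * u.
Proof.
rewrite mulE big_ord_recr /= subnn big1 ?add0r // => i _.
rewrite /Pc /psC /=; case E: (n - i)%N => [|m]; last by rewrite mulr0.
by move: (ltn_ord i); rewrite -subn_gt0 E.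
Qed.

Lemma PxiE u n : Pxi u n = if n == 1%N then u else 0. Proof. by []. Qed.
Lemma PcE u n : Pc u n = if n is 0%N then u else 0. Proof. by []. Qed.

Lemma Pc_Pxi u v : Pc u * Pxi v = Pxi (u * v).
Proof. by apply: funext => n; rewrite Pc_mulE !PxiE; case: eqP; rewrite ?mulr0. Qed.
Lemma Pxi_Pc u v : Pxi v * Pc u = Pxi (v * u).
Proof. by apply: funext => n; rewrite mul_PcE !PxiE; case: eqP; rewrite ?mul0r. Qed.
Lemma Pc_Pc u v : Pc u * Pc v = Pc (u * v).
Proof. by apply: funext => n; rewrite Pc_mulE !PcE; case: n; rewrite ?mulr0. Qed.
Lemma Pc_add u v : Pc (u + v) = Pc u + Pc v.
Proof. by apply: funext => n; rewrite addE !PcE; case: n; rewrite ?addr0. Qed.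
Lemma Pc_opp u : Pc (- u) = - Pc u.
Proof. by apply: funext => n; rewrite oppE !PcE; case: n; rewrite ?oppr0. Qed.
Lemma Pxi_add u v : Pxi (u + v) = Pxi u + Pxi v.
Proof. by apply: funext => n; rewrite addE !PxiE; case: eqP; rewrite ?addr0. Qed.
Lemma Pxi_opp u : Pxi (- u) = - Pxi u.
Proof. by apply: funext => n; rewrite oppE !PxiE; case: eqP; rewrite ?oppr0. Qed.
Lemma Pxi0s : Pxi (0 : A) = 0.
Proof. by apply: funext => n; rewrite PxiE; case: eqP. Qed.
Lemma Pc1 : Pc (1 : A) = 1. Proof. by []. Qed.

Lemma cc_PcPc u v : u * v = v * u -> cc (Pc u) (Pc v).
Proof. by move=> h [|i] [|j]; rewrite !PcE ?mulr0 ?mul0r. Qed.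
Lemma cc_PcPxi u v : u * v = v * u -> cc (Pc u) (Pxi v).
Proof. by move=> h [|i] j; rewrite PcE PxiE; case: eqP; rewrite ?mulr0 ?mul0r. Qed.
Lemma cc_PxiPc u v : u * v = v * u -> cc (Pxi v) (Pc u).
Proof. by move=> h; apply: cc_sym; apply: cc_PcPxi. Qed.
Lemma cc_PxiPxi u v : u * v = v * u -> cc (Pxi u) (Pxi v).
Proof. by move=> h i j; rewrite !PxiE; do 2 case: eqP; rewrite ?mulr0 ?mul0r. Qed.

Lemma Pexp_zero : Pexp (0 : pser A) = 1.
Proof.
apply: agree_all => m n nm.
have e0 : (0 : pser A) 0%N = 0 by [].
rewrite (psexp_T (m := m.+1) e0 (ltnW nm)).
rewrite /expT big_ord_recl /= expr0 /= invr1 scale1r big1 ?addr0 // => i _.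
by rewrite expr0n /= scaler0.
Qed.

Lemma prod_exp_xi (r : seq nat) (F : nat -> A) :
  (forall s t, s \in r -> t \in r -> F s * F t = F t * F s) ->
  \prod_(s <- r) Pexp (Pxi (F s)) = Pexp (Pxi (\sum_(s <- r) F s)).
Proof.
elim: r => [|s r IH] H; first by rewrite !big_nil Pxi0s Pexp_zero.
rewrite !big_cons IH; last by move=> a b ar br; apply: H; rewrite inE ?ar ?br orbT.
rewrite Pxi_add exp_add //; try apply: cc_PxiPxi => //.
rewrite big_seq; apply: commr_sum => t tr; apply: H; rewrite inE ?eqxx ?tr ?orbT //.
Qed.


Lemma J_intw (H w : A) b : H * w = w * H ->
  (Pc H * Pln (Pxi w)) * b = b * (Pc H * Pln (Pxi w) + Pln (Pxi w)) ->
  Pexp (Pc H * Pln (Pxi w)) * b = b * (1 + Pxi w) * Pexp (Pc H * Pln (Pxi w)).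
Proof.
move=> hHw hb.
set s := Pln (Pxi w); set h := Pc H * s.
have s0 : s 0%N = 0 by apply: Pln0.
have h0 : h 0%N = 0 by rewrite /h mul0E s0 mulr0.
have hs0 : (h + s) 0%N = 0 by rewrite addE h0 s0 addr0.
have cww : cc (Pxi w) (Pxi w) by apply: cc_PxiPxi.
have css : cc s s by apply: cc_lnl => //; apply: cc_lnr.
have cHs : cc (Pc H) s by apply: cc_lnr => //; apply: cc_PcPxi.
have cHH : cc (Pc H) (Pc H) by apply: cc_PcPc.
have chs : cc h s by apply: cc_mull.
have chh : cc h h.
  by apply: cc_mull; apply: cc_mulr => //; apply: cc_sym.
have chw : cc h (Pxi w).
  by apply: cc_mull; [apply: cc_PcPxi | apply: cc_lnl].
rewrite (exp_intw h0 hs0 hb) exp_add // (exp_ln charC) // -mulrA.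
congr (_ * _); apply: cc_comm; apply: cc_expl' => //.
by apply: cc_addr => //; apply: cc_1r.
Qed.

Lemma chain_intw (G : nat -> pser A) m k0 P Q : (k0 < m)%N ->
  (forall k, (k < k0)%N -> G k * P = P * G k) ->
  G k0 * P = Q * G k0 ->
  (forall k, (k0 < k < m)%N -> G k * Q = Q * G k) ->
  \prod_(k <- rev (iota 0 m)) G k * P = Q * \prod_(k <- rev (iota 0 m)) G k.
Proof.
move=> km hlo hk0 hhi.
have iS j : rev (iota 0 j.+1) = j :: rev (iota 0 j).
  by rewrite -addn1 iotaD rev_cat /= add0n.
have lo : forall j, (j <= k0)%N ->
    \prod_(k <- rev (iota 0 j)) G k * P = P * \prod_(k <- rev (iota 0 j)) G k.
  elim=> [|j IH] jk; first by rewrite big_nil mul1r mulr1.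
  by rewrite iS big_cons -mulrA IH ?(ltnW jk) // !mulrA hlo.
elim: m km hhi => [|m IH] // km hhi.
rewrite iS big_cons; move: km; rewrite ltnS leq_eqVlt => /orP[/eqP <-|km].
  by rewrite -mulrA lo // mulrA hk0 mulrA.
rewrite -mulrA IH // ?mulrA ?hhi //; first by rewrite km leqnn.
by move=> k /andP[k0k km']; apply: hhi; rewrite k0k ltnS ltnW.
Qed.

End Glue.


Section Allc.
Variables (C : fieldType) (A : algType C) (N : nat).

Definition allc (e : nat -> nat -> A) (u : A) := forall p q, u * e p q = e p q * u.

Lemma allc_glI e u : allc e u -> u * glI N e = glI N e * u.
Proof. by move=> h; rewrite /glI mulr_suml mulr_sumr; apply: eq_bigr => m _; rewrite h. Qed.

Lemma allc_HP e u a : allc e u -> u * HP N e a = HP N e a * u.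
Proof.
move=> h; rewrite /HP [u * _]mulrBr [_ * u]mulrBl h -scalerAr -scalerAl allc_glI //.
Qed.

Lemma allc_Hperp e u i : allc e u -> u * Hperp N e i = Hperp N e i * u.
Proof.
move=> h; rewrite /Hperp [u * _]mulrBr [_ * u]mulrBl -scalerAr -scalerAl allc_glI //.
congr (_ - _); rewrite mulr_suml mulr_sumr; apply: eq_bigr => m _; by rewrite h.
Qed.

Lemma comm4 (x1 x2 y1 y2 : A) : x1 * x2 = x2 * x1 -> y1 * y2 = y2 * y1 ->
  y1 * x2 = x2 * y1 -> y2 * x1 = x1 * y2 -> x1 * y1 * (x2 * y2) = x2 * y2 * (x1 * y1).
Proof.
move=> h1 h2 h3 h4.
transitivity (x1 * x2 * (y1 * y2)).
  by rewrite -!mulrA; congr (_ * _); rewrite !mulrA h3.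
transitivity (x2 * x1 * (y2 * y1)); first by rewrite h1 h2.
by rewrite -!mulrA; congr (_ * _); rewrite !mulrA h4.
Qed.

End Allc.

Section Main.
Variables (C : fieldType) (A : algType C) (N : nat) (x y : nat -> nat -> A).
Hypotheses (hx : gl_family N x) (hy : gl_family N y) (hxy : commuting_families x y).
Variables (z n : nat).
Hypotheses (hz1 : (2 * z <= N)%N) (hz2 : (N <= 2 * z + 1)%N) (hn : (n + z)%N = N)
  (hN : (3 <= N)%N).

Lemma hyx i j k l : y i j * x k l = x k l * y i j.
Proof. by rewrite hxy. Qed.

Lemma ax_y i j : allc x (y i j). Proof. by move=> p q; rewrite hyx. Qed.
Lemma ay_x i j : allc y (x i j). Proof. by move=> p q; rewrite hxy. Qed.

Lemma ax_HPy a : allc x (HP N y a).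
Proof. by move=> p q; apply/esym/allc_HP/ay_x. Qed.
Lemma ay_HPx a : allc y (HP N x a).
Proof. by move=> p q; apply/esym/allc_HP/ax_y. Qed.
Lemma ax_Hy i : allc x (Hperp N y i).
Proof. by move=> p q; apply/esym/allc_Hperp/ay_x. Qed.
Lemma ay_Hx i : allc y (Hperp N x i).
Proof. by move=> p q; apply/esym/allc_Hperp/ax_y. Qed.

Ltac rng := rewrite /inr; lia.

Lemma T_pair k s t : (k < z)%N -> s \in Rk N k -> t \in Rk N k ->
  x k.+1 s * y s (N - k)%N * (x k.+1 t * y t (N - k)%N) =
  x k.+1 t * y t (N - k)%N * (x k.+1 s * y s (N - k)%N).
Proof.
move=> kz; have hk : (2 * k.+1 <= N)%N by lia.
rewrite !mem_Rk // => hs ht.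
apply: comm4; try by rewrite hyx.
  by apply: (glc hx); rewrite ?eqn_leq; try rng; lia.
by apply: (glc hy); rewrite ?eqn_leq; try rng; lia.
Qed.


Lemma diag_term (X Y Hx Hy : A) (d1 d2 : C) :
  Hx * X = X * Hx - d1 *: X -> Hy * Y = Y * Hy - d2 *: Y ->
  Hy * X = X * Hy -> Hx * Y = Y * Hx -> d1 + d2 = 0 ->
  X * Y * (Hx + Hy) = (Hx + Hy) * (X * Y).
Proof.
move=> h1 h2 h3 h4 hd.
have -> : (Hx + Hy) * (X * Y) = X * Y * Hx + X * Y * Hy - (d1 + d2) *: (X * Y).
  rewrite mulrDl !mulrA h1 h3 -[X * Hy * Y]mulrA h2 mulrBl -[X * Hx * Y]mulrA h4.
  rewrite mulrBr !mulrA -scalerAl -scalerAr scalerDl.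
  by rewrite opprD addrACA.
by rewrite hd scale0r subr0 mulrDr.
Qed.

Lemma memSp i m : (m \in Sp N i) = (i < m <= N - i)%N.
Proof. by rewrite /Sp mem_index_iota ltnS. Qed.

Lemma F3_T k i : (k < z)%N -> (0 < i < n)%N ->
  Tsum N x y k * (Hperp N x i + Hperp N y i) = (Hperp N x i + Hperp N y i) * Tsum N x y k.
Proof.
move=> kz iz; have hk : (2 * k.+1 <= N)%N by lia.
rewrite /Tsum mulr_suml mulr_sumr; apply: eq_big_seq => s sR.
have rs := Rk_inr hk sR; move: sR; rewrite mem_Rk // => hs.
apply: (diag_term (d1 := ((k.+1 \in Sp N i)%:R - (s \in Sp N i)%:R))
                  (d2 := ((s \in Sp N i)%:R - ((N - k)%N \in Sp N i)%:R))).
- by rewrite (Hperp_br hx) //; rng.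
- by rewrite (Hperp_br hy) //; rng.
- exact: ax_Hy.
- by rewrite (ay_Hx i).
have -> : (k.+1 \in Sp N i) = ((N - k)%N \in Sp N i) by rewrite !memSp; apply/idP/idP; lia.
by rewrite addrA subrK subrr.
Qed.

Lemma F3_HP k i : (k < z)%N ->
  (Hperp N x i + Hperp N y i) * HP N x k.+1 = HP N x k.+1 * (Hperp N x i + Hperp N y i).
Proof.
move=> kz.
have h1 : Hperp N x i * HP N x k.+1 = HP N x k.+1 * Hperp N x i.
  by apply: diagc_HP; [rng | exact: diagc_Hperp_self].
have h2 : Hperp N y i * HP N x k.+1 = HP N x k.+1 * Hperp N y i.
  by apply: allc_HP; apply: ax_Hy.
by rewrite (mulrDl (Hperp N x i)) (mulrDr (HP N x k.+1)) h1 h2.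
Qed.

Lemma F3_w k i : (k < z)%N -> (0 < i < n)%N ->
  (Hperp N x i + Hperp N y i) * y k.+1 (N - k)%N = y k.+1 (N - k)%N * (Hperp N x i + Hperp N y i).
Proof.
move=> kz iz; rewrite mulrDl mulrDr (ay_Hx i) (Hperp_br hy); try by rng.
have -> : (k.+1 \in Sp N i) = ((N - k)%N \in Sp N i) by rewrite !memSp; apply/idP/idP; lia.
by rewrite subrr scale0r subr0.
Qed.


Definition ee (p q : nat) := x p q + y p q.

Lemma TS_e k p q : (k < z)%N -> inr N p -> inr N q -> q != k.+1 -> (N - k)%N != p ->
  Tsum N x y k * ee p q = ee p q * Tsum N x y k +
    (((p \in Rk N k)%:R - (q \in Rk N k)%:R : C) *: (x k.+1 q * y p (N - k)%N)).
Proof.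
move=> kz rp rq qa cp; have hk : (2 * k.+1 <= N)%N by lia.
rewrite /ee mulrDr (TS_x hx hxy) // (TS_y hy hxy) // mulrDl scalerBl.
by rewrite addrACA.
Qed.

Lemma F2_T_ne k j : (k < z)%N -> (0 < j < n)%N -> k.+1 != j ->
  Tsum N x y k * ee j (N - j)%N = ee j (N - j)%N * Tsum N x y k.
Proof.
move=> kz jn kj; have hk : (2 * k.+1 <= N)%N by lia.
rewrite TS_e //; try (by rng); try (by apply/eqP; lia).
rewrite !mem_Rk //.
have -> : (k.+1 < j < N - k)%N = (k.+1 < N - j < N - k)%N.
  by move/eqP: kj => kj; apply/idP/idP; lia.
by rewrite subrr scale0r addr0.
Qed.

Lemma F2_T_eq k j : (k < z)%N -> (0 < j < n)%N -> k.+1 = j ->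
  Tsum N x y k * ee j (N - j)%N =
  ee j (N - j)%N * Tsum N x y k - x j (N - j)%N * y j (N - k)%N.
Proof.
move=> kz jn kj; have hk : (2 * k.+1 <= N)%N by lia.
rewrite TS_e //; try (by rng); try (by apply/eqP; lia).
rewrite !mem_Rk //.
have -> : (k.+1 < j < N - k)%N = false by apply/negbTE/negP; lia.
have -> : (k.+1 < N - j < N - k)%N = true by apply/idP; lia.
by rewrite sub0r scaleN1r kj.
Qed.

Lemma F2_XY_T k j : (k < z)%N -> (0 < j < n)%N -> k.+1 = j ->
  x j (N - j)%N * y j (N - k)%N * Tsum N x y k = Tsum N x y k * (x j (N - j)%N * y j (N - k)%N).
Proof.
move=> kz jn kj; have hk : (2 * k.+1 <= N)%N by lia.
rewrite /Tsum mulr_suml mulr_sumr; apply: eq_big_seq => s sR.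
have rs := Rk_inr hk sR; move: sR; rewrite mem_Rk // => hs.
apply: comm4; try by rewrite hyx.
  by apply: (glc hx); rewrite ?eqn_leq; try rng; lia.
by apply: (glc hy); rewrite ?eqn_leq; try rng; lia.
Qed.

Lemma F2_HP_ne k j : (k < z)%N -> (0 < j < n)%N -> k.+1 != j ->
  HP N x k.+1 * ee j (N - j)%N = ee j (N - j)%N * HP N x k.+1.
Proof.
move=> kz jn kj; rewrite /ee mulrDr [_ * HP N x _]mulrDl (ay_HPx k.+1 j (N - j)%N).
rewrite (HP_br hx); try by rng.
have -> : (k.+1 == j) = false by apply/negbTE.
have -> : ((N - j)%N == k.+1) = false by apply/negbTE/eqP; lia.
by rewrite subrr scale0r addr0.
Qed.

Lemma F2_HP_eq j : (0 < j < n)%N ->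
  HP N x j * x j (N - j)%N = x j (N - j)%N * (HP N x j + 1).
Proof.
move=> jn; rewrite (HP_br hx); try by rng.
have -> : ((N - j)%N == j) = false by apply/negbTE/eqP; lia.
by rewrite eqxx subr0 scale1r (mulrDr (x _ _) (HP N x _)) mulr1.
Qed.

Lemma F2_w k j : (k < z)%N -> (0 < j < n)%N ->
  y k.+1 (N - k)%N * ee j (N - j)%N = ee j (N - j)%N * y k.+1 (N - k)%N.
Proof.
move=> kz jn; rewrite /ee mulrDr mulrDl hyx; congr (_ + _).
by apply: (glc hy); try rng; apply/eqP; lia.
Qed.

Lemma F1_T_lt k k0 : (k0 < z)%N -> (k < k0)%N ->
  Tsum N x y k * ee k0.+1 (N - k0)%N = ee k0.+1 (N - k0)%N * Tsum N x y k.
Proof.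
move=> kz kk; have hk : (2 * k.+1 <= N)%N by lia.
rewrite TS_e //; try (by rng); try (by apply/eqP; lia).
rewrite !mem_Rk //.
have -> : (k.+1 < k0.+1 < N - k)%N = true by apply/idP; lia.
have -> : (k.+1 < N - k0 < N - k)%N = true by apply/idP; lia.
by rewrite subrr scale0r addr0.
Qed.

Lemma F1_T_ge k k0 : (k < z)%N -> (k0 <= k)%N ->
  Tsum N x y k * x k0.+1 (N - k0)%N = x k0.+1 (N - k0)%N * Tsum N x y k /\
  Tsum N x y k * y k0.+1 (N - k0)%N = y k0.+1 (N - k0)%N * Tsum N x y k.
Proof.
move=> kz kk; have hk : (2 * k.+1 <= N)%N by lia.
rewrite (TS_x hx hxy) // ?(TS_y hy hxy) //; try (by rng); try (by apply/eqP; lia).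
rewrite !mem_Rk //.
have -> : (k.+1 < k0.+1 < N - k)%N = false by apply/negbTE/negP; lia.
have -> : (k.+1 < N - k0 < N - k)%N = false by apply/negbTE/negP; lia.
by rewrite !scale0r addr0 subr0.
Qed.

Lemma F1_HP_ne k k0 : (k < z)%N -> (k0 < z)%N -> k != k0 ->
  HP N x k.+1 * x k0.+1 (N - k0)%N = x k0.+1 (N - k0)%N * HP N x k.+1 /\
  HP N x k.+1 * y k0.+1 (N - k0)%N = y k0.+1 (N - k0)%N * HP N x k.+1.
Proof.
move=> kz k0z kk; split; last exact: ay_HPx.
rewrite (HP_br hx); try by rng.
have -> : (k.+1 == k0.+1) = false by apply/negbTE.
have -> : ((N - k0)%N == k.+1) = false by apply/negbTE/eqP; lia.
by rewrite subrr scale0r addr0.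
Qed.

Lemma F1_HP_eq k : (k < z)%N ->
  HP N x k.+1 * x k.+1 (N - k)%N = x k.+1 (N - k)%N * (HP N x k.+1 + 1).
Proof.
move=> kz; rewrite (HP_br hx); try by rng.
have -> : ((N - k)%N == k.+1) = false by apply/negbTE/eqP; lia.
by rewrite eqxx subr0 scale1r (mulrDr (x _ _) (HP N x _)) mulr1.
Qed.

Lemma F1_w k k0 : (k < z)%N -> (k0 < z)%N ->
  y k.+1 (N - k)%N * y k0.+1 (N - k0)%N = y k0.+1 (N - k0)%N * y k.+1 (N - k)%N.
Proof. by move=> kz k0z; apply: (glc hy); try rng; apply/eqP; lia. Qed.


Lemma F2_w' k j : (k < z)%N -> (0 < j < n)%N ->
  y k.+1 (N - k)%N * y j (N - j)%N = y j (N - j)%N * y k.+1 (N - k)%N.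
Proof. by move=> kz jn; apply: (glc hy); try rng; apply/eqP; lia. Qed.


Hypothesis charC : forall k, (k.+1%:R : C) != 0.
Variable nu : nat -> C.

Lemma scomm (u v : A) (a b : C) : u * v = v * u -> (a *: u) * (b *: v) = (b *: v) * (a *: u).
Proof. by move=> h; rewrite -!scalerAl -!scalerAr h scalerA mulrC -scalerA. Qed.
Lemma scomm1 (u v : A) (b : C) : u * v = v * u -> u * (b *: v) = (b *: v) * u.
Proof. by move=> h; rewrite -scalerAl -scalerAr h. Qed.

Definition Ext k : pser A := Pexp (Pxi (nu k.+1 *: Tsum N x y k)).
Definition hk k : pser A := Pc (HP N x k.+1) * Pln (Pxi (nu k.+1 *: y k.+1 (N - k)%N)).
Definition G k : pser A := Ext k * Pexp (hk k).

Lemma hk0 k : hk k 0%N = 0.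
Proof. by rewrite /hk mul0E Pln0 mulr0. Qed.

Lemma G0 k : G k 0%N = 1.
Proof. by rewrite /G /Ext mul0E !Pexp0 mulr1. Qed.

Lemma comm_G k P : P * Pxi (nu k.+1 *: Tsum N x y k) = Pxi (nu k.+1 *: Tsum N x y k) * P ->
  P * hk k = hk k * P -> G k * P = P * G k.
Proof.
move=> h1 h2; rewrite /G /Ext -mulrA -(exp_comm (hk0 k) h2) mulrA.
by rewrite -(exp_comm (Pxi0 _) h1) mulrA.
Qed.

Lemma FP_eq k : (k < z)%N -> (FP N x y k (nu k.+1) : pser A) = G k.
Proof.
move=> kz.
have e1 : psprod [seq psexp (psXi (nu k.+1 *: (x k.+1 s * y s (N - k)%N))) | s <- Rk N k]
          = Ext k.
  rewrite psprodE big_map.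
  transitivity (\prod_(s <- Rk N k) Pexp (Pxi (nu k.+1 *: (x k.+1 s * y s (N - k)%N)))); first by [].
  rewrite prod_exp_xi //; first by rewrite /Ext /Tsum scaler_sumr.
  by move=> s t sR tR; apply: scomm; apply: T_pair.
have e2 : psexp (fun m => HP N x k.+1 * sigma y k.+1 (N - k)%N (nu k.+1) m) = Pexp (hk k).
  by rewrite /Pexp /hk; congr psexp; apply: funext => m; rewrite Pc_mulE.
transitivity (Ext k * Pexp (hk k)); last by [].
by rewrite -e1 -e2.
Qed.

Lemma z_pos : (0 < z)%N. Proof. lia. Qed.

Lemma F_eq : (FPchain N x y z.-1 nu : pser A) = \prod_(k <- rev (iota 0 z)) G k.
Proof.
rewrite /FPchain psprodE big_map prednK ?z_pos //.
apply: eq_big_seq => k; rewrite mem_rev mem_iota add0n => /andP[_ kz].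
exact: FP_eq.
Qed.

Lemma F0 : (\prod_(k <- rev (iota 0 z)) G k) 0%N = 1.
Proof.
elim: (rev (iota 0 z)) => [|k r IH]; first by rewrite big_nil.
by rewrite big_cons mul0E IH G0 mulr1.
Qed.

Lemma twist_eq (F X Y : pser A) : F 0%N = 1 -> F * X = Y * F -> twist F X = Y.
Proof.
move=> f0 h; rewrite /twist.
have [h1 _] := psinvK f0.
transitivity (F * X * Pinv F); first by [].
by rewrite h -mulrA h1 mulr1.
Qed.


Lemma Hperp_add i : Hperp N (fam_add x y) i = Hperp N x i + Hperp N y i.
Proof.
rewrite /Hperp /glI /fam_add !big_split /= scalerDr opprD addrACA //.
Qed.

Lemma all_comm_chain P : (forall k, (k < z)%N -> G k * P = P * G k) ->
  \prod_(k <- rev (iota 0 z)) G k * P = P * \prod_(k <- rev (iota 0 z)) G k.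
Proof.
move=> h; apply: (chain_intw (k0 := 0)); first exact: z_pos.
- by [].
- exact: h z_pos.
by move=> k /andP[_ kz]; apply: h.
Qed.

Lemma claim3 i : (0 < i < n)%N ->
  twist (FPchain N x y z.-1 nu) (psC (Hperp N (fam_add x y) i)) =
  psadd (psC (Hperp N x i)) (psC (Hperp N y i)).
Proof.
move=> iz.
set H := Hperp N x i + Hperp N y i.
have e1 : psC (Hperp N (fam_add x y) i) = Pc H :> pser A by rewrite Hperp_add.
have e2 : psadd (psC (Hperp N x i)) (psC (Hperp N y i)) = Pc H :> pser A by rewrite /H Pc_add.
rewrite e1 e2 F_eq; apply: twist_eq; first exact: F0.
apply: all_comm_chain => k kz; apply: comm_G.
  by rewrite Pc_Pxi Pxi_Pc; congr Pxi; apply: scomm1; rewrite F3_T.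
apply: cc_comm; apply: cc_mulr.
  by apply: cc_PcPc; rewrite F3_HP.
by apply: cc_lnr => //; apply: cc_PcPxi; apply: scomm1; rewrite F3_w.
Qed.


Lemma commP2_ne j k : (0 < j < n)%N -> (k < z)%N -> k.+1 != j ->
  G k * Pc (ee j (N - j)%N) = Pc (ee j (N - j)%N) * G k.
Proof.
move=> jn kz kj; apply: comm_G.
  by rewrite Pc_Pxi Pxi_Pc; congr Pxi; apply: scomm1; rewrite F2_T_ne.
apply: cc_comm; apply: cc_mulr.
  by apply: cc_PcPc; rewrite F2_HP_ne.
by apply: cc_lnr => //; apply: cc_PcPxi; apply: scomm1; rewrite F2_w.
Qed.

Lemma commP2_eq j : (0 < j < n)%N ->
  G j.-1 * Pc (ee j (N - j)%N) = Pc (ee j (N - j)%N) * G j.-1.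
Proof.
move=> jn; set k := j.-1.
have kj : k.+1 = j by rewrite /k prednK //; lia.
have kz : (k < z)%N by rewrite /k; lia.
set u := Pc (x j (N - j)%N); set v := Pc (y j (N - j)%N).
set w := nu k.+1 *: y k.+1 (N - k)%N.
set T := nu k.+1 *: Tsum N x y k.
have ePuv : Pc (ee j (N - j)%N) = u + v by rewrite /ee Pc_add.
have hJu : Pexp (hk k) * u = u * (1 + Pxi w) * Pexp (hk k).
  apply: (J_intw charC).
    by apply: scomm1; apply: ay_HPx.
  have su : Pln (Pxi w) * u = u * Pln (Pxi w).
    by apply: cc_comm; apply: cc_lnl => //; apply: cc_PxiPc; apply: scomm1; apply: hxy.
  rewrite -mulrA su mulrA /u Pc_Pc kj F2_HP_eq // -Pc_Pc Pc_add Pc1 -mulrA mulrDl mul1r.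
  by rewrite -kj.
have hJv : Pexp (hk k) * v = v * Pexp (hk k).
  apply: esym; apply: exp_comm; first exact: hk0.
  apply: cc_comm; apply: cc_mulr.
    by apply: cc_PcPc; rewrite ay_HPx.
  by apply: cc_lnr => //; apply: cc_PcPxi; apply: scomm1; rewrite F2_w'.
set Q := Pxi (x j (N - j)%N * w).
have hJP : Pexp (hk k) * (u + v) = (u + v + Q) * Pexp (hk k).
  by rewrite mulrDr hJu hJv mulrDr mulr1 /u Pc_Pxi -/Q -mulrDl addrAC.
have c1 : (x j (N - j)%N * w) * T = T * (x j (N - j)%N * w).
  have c0 : x j (N - j)%N * y k.+1 (N - k)%N * Tsum N x y k =
            Tsum N x y k * (x j (N - j)%N * y k.+1 (N - k)%N).
    by rewrite kj; apply: F2_XY_T.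
  by rewrite /w /T -[x j (N - j)%N * _]scalerAr; apply: scomm.
have hEP : Ext k * (u + v) = (u + v + - Q) * Ext k.
  rewrite /Ext -/T; apply: (exp_K2 charC); first exact: Pxi0.
    rewrite mulrDr mulrDl /u /v !Pc_Pxi !Pxi_Pc -!Pxi_add /Q -Pxi_opp -Pxi_add; congr Pxi.
    rewrite -mulrDr -mulrDl -/(ee j (N - j)%N) /T -scalerAl -scalerAr.
    rewrite (F2_T_eq kz jn kj) scalerBr /w -scalerAr kj.
    done.
  rewrite /Q -Pxi_opp; apply: cc_comm; apply: cc_PxiPxi.
  by rewrite mulNr mulrN c1.
have hEQ : Ext k * Q = Q * Ext k.
  rewrite /Ext -/T; apply: esym; apply: exp_comm; first exact: Pxi0.
  by apply: cc_comm; apply: cc_PxiPxi.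
rewrite ePuv /G -mulrA hJP mulrA mulrDr hEP hEQ -mulrDl addrNK mulrA.
done.
Qed.


Lemma claim2 j : (0 < j < n)%N ->
  twist (FPchain N x y z.-1 nu) (psC (fam_add x y j (N - j)%N)) =
  psadd (psC (x j (N - j)%N)) (psC (y j (N - j)%N)).
Proof.
move=> jn.
have e1 : psC (fam_add x y j (N - j)%N) = Pc (ee j (N - j)%N) :> pser A by [].
have e2 : psadd (psC (x j (N - j)%N)) (psC (y j (N - j)%N)) = Pc (ee j (N - j)%N) :> pser A.
  by rewrite /ee Pc_add.
rewrite e1 e2 F_eq; apply: twist_eq; first exact: F0.
apply: (chain_intw (k0 := j.-1)); first by lia.
- move=> k kj; apply: commP2_ne => //; first by lia.
  by apply/eqP; lia.
- exact: commP2_eq.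
move=> k /andP[kj kz]; apply: commP2_ne => //.
by apply/eqP; lia.
Qed.

Section Claim1.
Variable k0 : nat.
Hypothesis k0z : (k0 < z)%N.
Let X : pser A := Pln (Pxi (nu k0.+1 *: ee k0.+1 (N - k0)%N)).
Let u : pser A := Pxi (nu k0.+1 *: x k0.+1 (N - k0)%N).
Let v : pser A := Pxi (nu k0.+1 *: y k0.+1 (N - k0)%N).
Let Y : pser A := Pln u + Pln v.

Lemma commX_lt k : (k < k0)%N -> G k * X = X * G k.
Proof.
move=> kk; have kz : (k < z)%N by lia.
apply: comm_G.
  apply: esym; apply: ln_comm; first exact: Pxi0.
  by apply: cc_comm; apply: cc_PxiPxi; apply: scomm; apply: F1_T_lt.
apply: cc_comm; apply: cc_lnl; first exact: Pxi0.
have kne : k != k0 by rewrite ltn_eqF.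
have [h1 h2] := F1_HP_ne kz k0z kne.
apply: cc_mulr.
  by apply: cc_PxiPc; apply: scomm1; rewrite /ee (mulrDr (HP N x k.+1)) (mulrDl _ _ (HP N x k.+1)) h1 h2.
apply: cc_lnr; first exact: Pxi0.
apply: cc_PxiPxi; apply: scomm; rewrite /ee mulrDr mulrDl hxy.
by rewrite (F1_w k0z kz).
Qed.

Lemma Y_T k : (k < z)%N -> (k0 <= k)%N ->
  Y * Pxi (nu k.+1 *: Tsum N x y k) = Pxi (nu k.+1 *: Tsum N x y k) * Y.
Proof.
move=> kz kk; have [h1 h2] := F1_T_ge kz kk.
rewrite /Y mulrDl mulrDr; congr (_ + _); apply: esym; apply: ln_comm;
  try exact: Pxi0; apply: cc_comm; apply: cc_PxiPxi; apply: scomm => //.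
Qed.

Lemma commX_eq : G k0 * X = Y * G k0.
Proof.
set w := nu k0.+1 *: y k0.+1 (N - k0)%N.
set J := Pexp (hk k0).
have hJu : J * u = u * (1 + Pxi w) * J.
  apply: (J_intw charC).
    by apply: scomm1; apply: ay_HPx.
  have su : Pln (Pxi w) * u = u * Pln (Pxi w).
    by apply: cc_comm; apply: cc_lnl => //; apply: cc_PxiPxi; apply: scomm; apply: hyx.
  rewrite -mulrA su mulrA /u Pc_Pxi -scalerAr F1_HP_eq // scalerAl -Pxi_Pc Pc_add Pc1.
  by rewrite -mulrA mulrDl mul1r.
have hJv : J * v = v * J.
  apply: esym; apply: exp_comm; first exact: hk0.
  apply: cc_comm; apply: cc_mulr.
    by apply: cc_PxiPc; apply: scomm1; rewrite ay_HPx.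
  by apply: cc_lnr => //; apply: cc_PxiPxi.
have hJg : J * (u + v) = (u + v + u * v) * J.
  by rewrite mulrDr hJu hJv mulrDr mulr1 -mulrDl addrAC.
have J0 : J 0%N = 1 by apply: Pexp0.
have [Ji1 Ji2] := psinvK J0.
have eX : X = Pln (u + v) by rewrite /X /ee scalerDr Pxi_add.
have u0 : u 0%N = 0 by [].
have v0 : v 0%N = 0 by [].
have cuv : cc u v by apply: cc_PxiPxi; apply: scomm; apply: hxy.
have g0 : (u + v) 0%N = 0 by rewrite addE u0 v0 addr0.
have hc := ln_conj Ji1 Ji2 g0.
have cuu : cc u u by apply: cc_PxiPxi.
have cvv : cc v v by apply: cc_PxiPxi.
have hp := ln_prod charC u0 v0 cuu cvv cuv.
have hJX : J * X = Y * J.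
  have e : J * X * Pinv J = Y.
    by rewrite eX -hc hJg -mulrA Ji1 mulr1 hp.
  by rewrite -e -mulrA Ji2 mulr1.
have hEY : Ext k0 * Y = Y * Ext k0.
  by apply: esym; apply: exp_comm; [exact: Pxi0 | apply: Y_T].
by rewrite /G -mulrA -/J hJX mulrA hEY mulrA.
Qed.

Lemma commY_gt k : (k0 < k < z)%N -> G k * Y = Y * G k.
Proof.
move=> /andP[kk kz]; apply: comm_G.
  by apply: Y_T => //; apply: ltnW.
have kne : k != k0 by rewrite gtn_eqF.
have [h1 h2] := F1_HP_ne kz k0z kne.
apply: cc_comm; apply: cc_addl; apply: cc_lnl => //; apply: cc_mulr.
- by apply: cc_PxiPc; apply: scomm1; rewrite h1.
- apply: cc_lnr => //; apply: cc_PxiPxi; apply: scomm; apply: hxy.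
- by apply: cc_PxiPc; apply: scomm1; rewrite h2.
by apply: cc_lnr => //; apply: cc_PxiPxi; apply: scomm; apply: F1_w.
Qed.

Lemma claim1 :
  twist (FPchain N x y z.-1 nu) (sigma (fam_add x y) k0.+1 (N - k0)%N (nu k0.+1)) =
  psadd (sigma x k0.+1 (N - k0)%N (nu k0.+1)) (sigma y k0.+1 (N - k0)%N (nu k0.+1)).
Proof.
have e1 : sigma (fam_add x y) k0.+1 (N - k0)%N (nu k0.+1) = X :> pser A by [].
have e2 : psadd (sigma x k0.+1 (N - k0)%N (nu k0.+1)) (sigma y k0.+1 (N - k0)%N (nu k0.+1))
   = Y :> pser A by [].
rewrite e1 e2 F_eq; apply: twist_eq; first exact: F0.
apply: (chain_intw (k0 := k0)) => //.
- exact: commX_lt.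
- exact: commX_eq.
exact: commY_gt.
Qed.

End Claim1.


Lemma claim4 i j : (0 < i < n)%N -> (0 < j < n)%N ->
  Hperp N x i * x j (N - j)%N - x j (N - j)%N * Hperp N x i = (i == j)%:R *: x j (N - j)%N.
Proof.
move=> iz jz; rewrite (Hperp_br hx); try by rng.
rewrite addrAC subrr add0r -scaleNr opprB !memSp.
have -> : (i < j <= N - i)%N = (i < j)%N by apply/idP/idP; lia.
have -> : (i < N - j <= N - i)%N = (i <= j)%N by apply/idP/idP; lia.
by case: ltngtP => _; rewrite ?subrr ?subr0.
Qed.

Lemma claim5 i i' : Hperp N x i * Hperp N x i' = Hperp N x i' * Hperp N x i.
Proof. by apply: diagc_Hperp; apply: diagc_Hperp_self. Qed.

Lemma claim6 k k' : (k < z)%N -> (k' < z)%N ->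
  psmul (sigma x k.+1 (N - k)%N (nu k.+1)) (sigma x k'.+1 (N - k')%N (nu k'.+1)) =
  psmul (sigma x k'.+1 (N - k')%N (nu k'.+1)) (sigma x k.+1 (N - k)%N (nu k.+1)).
Proof.
move=> kz kz'.
have := @cc_comm _ _ (Pln (Pxi (nu k.+1 *: x k.+1 (N - k)%N)))
          (Pln (Pxi (nu k'.+1 *: x k'.+1 (N - k')%N))); apply.
apply: cc_lnl => //; apply: cc_lnr => //; apply: cc_PxiPxi; apply: scomm.
by apply: (glc hx); try rng; apply/eqP; lia.
Qed.

Lemma claim7 j j' : (0 < j < n)%N -> (0 < j' < n)%N ->
  x j (N - j)%N * x j' (N - j')%N = x j' (N - j')%N * x j (N - j)%N.
Proof. by move=> jz jz'; apply: (glc hx); try rng; apply/eqP; lia. Qed.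

Lemma claim8 k j : (k < z)%N -> (0 < j < n)%N ->
  psmul (sigma x k.+1 (N - k)%N (nu k.+1)) (psC (x j (N - j)%N)) =
  psmul (psC (x j (N - j)%N)) (sigma x k.+1 (N - k)%N (nu k.+1)).
Proof.
move=> kz jz.
have := @cc_comm _ _ (Pln (Pxi (nu k.+1 *: x k.+1 (N - k)%N))) (Pc (x j (N - j)%N)); apply.
apply: cc_lnl => //; apply: cc_PxiPc; apply: scomm1.
by apply: (glc hx); try rng; apply/eqP; lia.
Qed.

Lemma main_pack :
  (forall k, (k < z)%N ->
     twist (FPchain N x y z.-1 nu) (sigma (fam_add x y) k.+1 (N - k) (nu k.+1)) =
     psadd (sigma x k.+1 (N - k) (nu k.+1)) (sigma y k.+1 (N - k) (nu k.+1))) /\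
  (forall j, (0 < j < n)%N ->
     twist (FPchain N x y z.-1 nu) (psC (fam_add x y j (N - j)%N)) =
       psadd (psC (x j (N - j)%N)) (psC (y j (N - j)%N))) /\
  (forall i, (0 < i < n)%N ->
     twist (FPchain N x y z.-1 nu) (psC (Hperp N (fam_add x y) i)) =
       psadd (psC (Hperp N x i)) (psC (Hperp N y i))) /\
  (forall i j, (0 < i < n)%N -> (0 < j < n)%N ->
     Hperp N x i * x j (N - j)%N - x j (N - j)%N * Hperp N x i
       = (i == j)%:R *: x j (N - j)%N) /\
  (forall i i', (0 < i < n)%N -> (0 < i' < n)%N ->
     Hperp N x i * Hperp N x i' = Hperp N x i' * Hperp N x i) /\
  (forall k k', (k < z)%N -> (k' < z)%N ->
     psmul (sigma x k.+1 (N - k) (nu k.+1)) (sigma x k'.+1 (N - k') (nu k'.+1)) =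
     psmul (sigma x k'.+1 (N - k') (nu k'.+1)) (sigma x k.+1 (N - k) (nu k.+1))) /\
  (forall j j', (0 < j < n)%N -> (0 < j' < n)%N ->
     x j (N - j)%N * x j' (N - j')%N = x j' (N - j')%N * x j (N - j)%N) /\
  (forall k j, (k < z)%N -> (0 < j < n)%N ->
     psmul (sigma x k.+1 (N - k) (nu k.+1)) (psC (x j (N - j)%N)) =
     psmul (psC (x j (N - j)%N)) (sigma x k.+1 (N - k) (nu k.+1))).
Proof.
split; first by move=> k kz; apply: claim1.
split; first exact: claim2.
split; first exact: claim3.
split; first exact: claim4.
split; first by move=> i i' _ _; apply: claim5.
split; first exact: claim6.
split; first exact: claim7.
exact: claim8.
Qed.

End Main.

Lemma charCplx k : (k.+1%:R : Cplx) != 0.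
Proof. change (k.+1%:R != 0 :> Rdefinitions.R[i]). by rewrite Num.Theory.pnatr_eq0. Qed.

Unset Implicit Arguments.

Theorem mainTheorem4 (N : nat) (hN : (3 <= N)%N) (nu : nat -> Cplx)
    (A : algType Cplx) (x y : nat -> nat -> A)
    (hx : gl_family N x) (hy : gl_family N y) (hxy : commuting_families x y) :
  let z := N./2 in
  let n := N.+1./2 in
  let F := FPchain N x y z.-1 nu in
  let D := fam_add x y in
  (forall k, (k < z)%N ->
     twist F (sigma D k.+1 (N - k) (nu k.+1)) =
     psadd (sigma x k.+1 (N - k) (nu k.+1)) (sigma y k.+1 (N - k) (nu k.+1))) /\
  (forall j, (0 < j < n)%N ->
     twist F (psC (D j (N - j)%N)) = psadd (psC (x j (N - j)%N)) (psC (y j (N - j)%N))) /\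
  (forall i, (0 < i < n)%N ->
     twist F (psC (Hperp N D i)) = psadd (psC (Hperp N x i)) (psC (Hperp N y i))) /\
  (forall i j, (0 < i < n)%N -> (0 < j < n)%N ->
     Hperp N x i * x j (N - j)%N - x j (N - j)%N * Hperp N x i
       = (i == j)%:R *: x j (N - j)%N) /\
  (forall i i', (0 < i < n)%N -> (0 < i' < n)%N ->
     Hperp N x i * Hperp N x i' = Hperp N x i' * Hperp N x i) /\
  (forall k k', (k < z)%N -> (k' < z)%N ->
     psmul (sigma x k.+1 (N - k) (nu k.+1)) (sigma x k'.+1 (N - k') (nu k'.+1)) =
     psmul (sigma x k'.+1 (N - k') (nu k'.+1)) (sigma x k.+1 (N - k) (nu k.+1))) /\
  (forall j j', (0 < j < n)%N -> (0 < j' < n)%N ->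
     x j (N - j)%N * x j' (N - j')%N = x j' (N - j')%N * x j (N - j)%N) /\
  (forall k j, (k < z)%N -> (0 < j < n)%N ->
     psmul (sigma x k.+1 (N - k) (nu k.+1)) (psC (x j (N - j)%N)) =
     psmul (psC (x j (N - j)%N)) (sigma x k.+1 (N - k) (nu k.+1))).
Proof.
move=> z n F D.
have h1 := odd_double_half N.
have h2 : n = (odd N + N./2)%N by rewrite /n -uphalf_half.
have hz1 : (2 * z <= N)%N.
  by rewrite /z; move: h1; case: (odd N) => /= <-; rewrite -muln2; lia.
have hz2 : (N <= 2 * z + 1)%N.
  by rewrite /z; move: h1; case: (odd N) => /= <-; rewrite -muln2; lia.
have hn : (n + z)%N = N.
  by rewrite h2 /z; move: h1; case: (odd N) => /= <-; rewrite -muln2; lia.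
exact: (main_pack hx hy hxy hz1 hz2 hn hN charCplx nu).
Qed.
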